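(* Let $s\in\mathbb{N}$, $m\ge s-1$, $n=9m$, $w_1,\dots,w_s\in\mathbb{C}$, $X=X(w_1,\dots,w_s)$, and let $\phi\in\mathbb{C}_m(\mathbb{Z})$ be a reproducing filter for $X$ with $\|\phi\|_2^2\le 2s/(2m+1)$. Let $\mathsf{S}_n(\phi)=\{z\in\mathbb{T}_n:|\phi(z)|\ge1\}$, let $\mathbf{E}_{m,n}(\phi)$ be the optimal value and $\rho^X$ an optimal solution of $$\min_{\rho\in\mathbb{C}_{5m}(\mathbb{Z})}\Big\{\sup_{z\in\mathbb{T}}|\rho(z)|:\ \rho(z)\phi(z)^2=1\ \ \forall z\in\mathsf{S}_n(\phi)\Big\},$$ and let $\varphi^X\in\mathbb{C}(\mathbb{Z})$ be defined by $\varphi^X(z)=\phi(z)^2+\rho^X(z)\big(\phi(z)^2-\phi(z)^4\big)$. Then $$\max\{\|\mathcal{F}_n[\varphi^X]\|_1,\,18s\|\mathcal{F}_n[\varphi^X]\|_\infty\}\le\frac{36s}{\sqrt{2n+1}}\big(\mathbf{E}_{m,n}(\phi)+1\big).$$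
   Context: $\mathbb{C}(\mathbb{Z})$: two-sided complex sequences; $\mathbb{C}_p(\mathbb{Z})$: those with $x_t=0$ for $|t|>p$. Each $u\in\mathbb{C}_p(\mathbb{Z})$ is identified with its $z$-transform (Laurent polynomial) $u(z)=\sum_\tau u_\tau z^{-\tau}$; products of Laurent polynomials correspond to convolutions $(u*v)_t=\sum_\tau u_\tau v_{t-\tau}$. $(\Delta x)_t=x_{t-1}$; $X(w_1,\dots,w_s)=\{x:\mathsf{f}(\Delta)x=0\}$ with $\mathsf{f}(z)=\prod_k(1-w_kz)$; $\phi$ is reproducing if $\phi*x=x$ for all $x\in X$. $\mathbb{T}$ is the unit circle and $\mathbb{T}_n=\{\exp(i2\pi k/(2n+1)):k=-n,\dots,n\}$. DFT $(\mathcal{F}_n[u])_k=(2n+1)^{-1/2}\sum_{|\tau|\le n}\exp(-i2\pi k\tau/(2n+1))u_\tau$, $k=0,\dots,2n$. *)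

(* Defs.v *)
From Stdlib Require Import Reals ZArith List.
From Coquelicot Require Import Coquelicot.
Open Scope R_scope.

Definition seqC := Z -> C.

Definition finsupp (p : nat) (u : seqC) : Prop :=
  forall t : Z, (Z.of_nat p < Z.abs t)%Z -> u t = RtoC 0.

Definition sumZ (p : nat) (F : Z -> C) : C :=
  sum_n (fun j : nat => F (Z.of_nat j - Z.of_nat p)%Z) (2 * p).

(* integer power z^k, k in Z (z <> 0 intended for k < 0) *)
Definition cpowZ (z : C) (k : Z) : C :=
  if (0 <=? k)%Z then pow_n z (Z.to_nat k)
  else Cinv (pow_n z (Z.to_nat (- k))).

Definition ztr (p : nat) (u : seqC) (z : C) : C :=
  sumZ p (fun tau => Cmult (u tau) (cpowZ z (- tau))).

Definition conv (p : nat) (u v : seqC) : seqC :=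
  fun t => sumZ p (fun tau => Cmult (u tau) (v (t - tau)%Z)).

(* (1 - w Delta) x, with (Delta x)_t = x_{t-1} *)
Definition factor_op (w : C) (x : seqC) : seqC :=
  fun t => Cminus (x t) (Cmult w (x (t - 1)%Z)).

(* f(Delta) x with f(z) = prod_k (1 - w_k z) *)
Fixpoint fDelta (ws : list C) (x : seqC) : seqC :=
  match ws with
  | nil => x
  | w :: ws' => factor_op w (fDelta ws' x)
  end.

Definition inX (ws : list C) (x : seqC) : Prop :=
  forall t, fDelta ws x t = RtoC 0.

Definition reproducing (m : nat) (ws : list C) (phi : seqC) : Prop :=
  forall x, inX ws x -> forall t, conv m phi x t = x t.

Definition l2sq (p : nat) (u : seqC) : R :=
  sum_n (fun j : nat => (Cmod (u (Z.of_nat j - Z.of_nat p)%Z)) ^ 2) (2 * p).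

Definition cis (theta : R) : C := (cos theta, sin theta).

Definition Tn_pt (n : nat) (k : Z) : C :=
  cis (2 * PI * IZR k / INR (2 * n + 1)).

Definition supT (p : nat) (u : seqC) : R :=
  real (Lub_Rbar (fun r => exists theta : R, r = Cmod (ztr p u (cis theta)))).

Definition feasible (m n : nat) (phi rho : seqC) : Prop :=
  finsupp (5 * m) rho /\
  forall k : Z, (- Z.of_nat n <= k <= Z.of_nat n)%Z ->
    1 <= Cmod (ztr m phi (Tn_pt n k)) ->
    Cmult (ztr (5 * m) rho (Tn_pt n k)) (pow_n (ztr m phi (Tn_pt n k)) 2) = RtoC 1.

Definition dft (n : nat) (u : seqC) (k : nat) : C :=
  Cmult (RtoC (/ sqrt (INR (2 * n + 1))))
    (sumZ n (fun tau => Cmult (cis (- (2 * PI * INR k * IZR tau / INR (2 * n + 1))))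
                              (u tau))).

Definition dft_norm1 (n : nat) (u : seqC) : R :=
  sum_n (fun k => Cmod (dft n u k)) (2 * n).

Definition dft_norminf (n : nat) (u : seqC) : R :=
  fold_right Rmax 0 (map (fun k => Cmod (dft n u k)) (seq 0 (2 * n + 1))).

(* phi^X = phi^2 + rho (phi^2 - phi^4), via convolutions *)
Definition phiX (m : nat) (phi rho : seqC) : seqC :=
  let phi2 := conv m phi phi in
  let phi4 := conv (2 * m) phi2 phi2 in
  fun t => Cplus (phi2 t) (conv (5 * m) rho (fun u => Cminus (phi2 u) (phi4 u)) t).

(* Main.v *)
Require Import Defs.
From Stdlib Require Import Reals ZArith List Lia Lra.
From Coquelicot Require Import Coquelicot.
Open Scope R_scope.

Fixpoint sumL (a : Z) (L : nat) (F : Z -> C) : C :=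
  match L with O => RtoC 0 | S L' => Cplus (sumL a L' F) (F (a + Z.of_nat L')%Z) end.
Fixpoint sumR (a : Z) (L : nat) (F : Z -> R) : R :=
  match L with O => 0 | S L' => sumR a L' F + F (a + Z.of_nat L')%Z end.

Lemma sumL_ext a L F G : (forall t, (a <= t < a + Z.of_nat L)%Z -> F t = G t) ->
  sumL a L F = sumL a L G.
Proof. induction L; simpl; intros H; auto. rewrite IHL. rewrite H. auto. lia. intros; apply H; lia. Qed.
Lemma sumR_ext a L F G : (forall t, (a <= t < a + Z.of_nat L)%Z -> F t = G t) ->
  sumR a L F = sumR a L G.
Proof. induction L; simpl; intros H; auto. rewrite IHL. rewrite H. auto. lia. intros; apply H; lia. Qed.
Lemma sumR_le a L F G : (forall t, (a <= t < a + Z.of_nat L)%Z -> F t <= G t) ->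
  sumR a L F <= sumR a L G.
Proof. induction L; simpl; intros H. lra. apply Rplus_le_compat. apply IHL. intros; apply H; lia. apply H; lia. Qed.
Lemma sumL_plus a L F G : sumL a L (fun t => Cplus (F t) (G t)) = Cplus (sumL a L F) (sumL a L G).
Proof. induction L; simpl. apply injective_projections; simpl; ring. rewrite IHL. ring. Qed.
Lemma sumL_minus a L F G : sumL a L (fun t => Cminus (F t) (G t)) = Cminus (sumL a L F) (sumL a L G).
Proof. induction L; simpl. apply injective_projections; simpl; ring. rewrite IHL. ring. Qed.
Lemma sumL_scal a L c F : sumL a L (fun t => Cmult c (F t)) = Cmult c (sumL a L F).
Proof. induction L; simpl. apply injective_projections; simpl; ring. rewrite IHL. ring. Qed.
Lemma sumR_scal a L c F : sumR a L (fun t => c * F t) = c * sumR a L F.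
Proof. induction L; simpl. ring. rewrite IHL. ring. Qed.
Lemma sumL_zero a L F : (forall t, (a <= t < a + Z.of_nat L)%Z -> F t = RtoC 0) -> sumL a L F = RtoC 0.
Proof. induction L; simpl; intros H; auto. rewrite IHL, H. apply injective_projections; simpl; ring. lia. intros; apply H; lia. Qed.
Lemma sumL_app a L1 L2 F : sumL a (L1 + L2) F = Cplus (sumL a L1 F) (sumL (a + Z.of_nat L1) L2 F).
Proof. induction L2; simpl. rewrite Nat.add_0_r. apply injective_projections; simpl; ring.
  rewrite Nat.add_succ_r. simpl. rewrite IHL2. replace (a + Z.of_nat (L1 + L2))%Z with (a + Z.of_nat L1 + Z.of_nat L2)%Z by lia. ring. Qed.
Lemma sumL_swap a L b M (G : Z -> Z -> C) :
  sumL a L (fun t => sumL b M (G t)) = sumL b M (fun u => sumL a L (fun t => G t u)).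
Proof. induction L; simpl. symmetry. apply sumL_zero. auto. rewrite IHL. rewrite <- sumL_plus. reflexivity. Qed.
Lemma sumL_shift a L F d : sumL a L (fun t => F (t - d)%Z) = sumL (a - d) L F.
Proof. induction L; simpl; auto. rewrite IHL. f_equal. f_equal. lia. Qed.
Lemma sumL_supp a L c M F : (a <= c)%Z -> (c + Z.of_nat M <= a + Z.of_nat L)%Z ->
  (forall t, (a <= t < a + Z.of_nat L)%Z -> (t < c \/ c + Z.of_nat M <= t)%Z -> F t = RtoC 0) ->
  sumL a L F = sumL c M F.
Proof. intros H1 H2 H.
  assert (L = Z.to_nat (c - a) + M + Z.to_nat (a + Z.of_nat L - c - Z.of_nat M))%nat as HL by lia.
  rewrite HL. rewrite !sumL_app.
  replace (a + Z.of_nat (Z.to_nat (c - a)))%Z with c by lia.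
  replace (a + Z.of_nat (Z.to_nat (c - a) + M))%Z with (c + Z.of_nat M)%Z by lia.
  rewrite (sumL_zero a (Z.to_nat (c - a))), (sumL_zero (c + Z.of_nat M)).
  rewrite Cplus_0_l, Cplus_0_r. reflexivity.
  intros t Ht. apply H; lia. intros t Ht. apply H; lia. Qed.
Lemma sumL_single a L c F : (a <= c < a + Z.of_nat L)%Z -> (forall t, (a <= t < a + Z.of_nat L)%Z -> t <> c -> F t = RtoC 0) -> sumL a L F = F c.
Proof. intros H1 H. rewrite (sumL_supp a L c 1). simpl. replace (c+0)%Z with c by lia.
  apply injective_projections; simpl; ring. lia. lia. intros; apply H; lia. Qed.
Lemma sumL_RtoC a L F : sumL a L (fun t => RtoC (F t)) = RtoC (sumR a L F).
Proof. induction L; simpl; auto. rewrite IHL. apply injective_projections; simpl; ring. Qed.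
Lemma sumL_conj a L F : Cconj (sumL a L F) = sumL a L (fun t => Cconj (F t)).
Proof. induction L; simpl. apply injective_projections; simpl; ring. rewrite Cplus_conj, IHL. auto. Qed.
Lemma sumL_Cmod a L F : Cmod (sumL a L F) <= sumR a L (fun t => Cmod (F t)).
Proof. induction L; simpl. rewrite Cmod_0. lra. eapply Rle_trans. apply Cmod_triangle. lra. Qed.
Lemma sumR_ge0 a L F : (forall t, 0 <= F t) -> 0 <= sumR a L F.
Proof. intros H; induction L; simpl. lra. pose proof (H (a + Z.of_nat L)%Z). lra. Qed.

Lemma sumZ_sumL p F : sumZ p F = sumL (- Z.of_nat p) (S (2 * p)) F.
Proof. unfold sumZ. generalize (2*p)%nat. induction n.
  rewrite sum_O. simpl. rewrite Cplus_0_l. f_equal. lia.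
  rewrite sum_Sn. rewrite IHn. change (sumL (- Z.of_nat p) (S (S n)) F) with (Cplus (sumL (- Z.of_nat p) (S n) F) (F (- Z.of_nat p + Z.of_nat (S n))%Z)).
  change plus with Cplus. f_equal. f_equal. lia. Qed.
Lemma sumn_sumR (f : nat -> R) N : sum_n f N = sumR 0 (S N) (fun t => f (Z.to_nat t)).
Proof. induction N. rewrite sum_O. simpl. ring.
  rewrite sum_Sn, IHN. change (sumR 0 (S (S N)) (fun t => f (Z.to_nat t))) with (sumR 0 (S N) (fun t => f (Z.to_nat t)) + f (Z.to_nat (0 + Z.of_nat (S N)))). change plus with Rplus. do 2 f_equal. lia. Qed.


Lemma cis_add a b : Cmult (cis a) (cis b) = cis (a + b).
Proof. unfold cis. apply injective_projections; simpl; [rewrite cos_plus|rewrite sin_plus]; ring. Qed.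
Lemma cis_conj a : Cconj (cis a) = cis (- a).
Proof. unfold cis, Cconj. simpl. rewrite cos_neg, sin_neg. auto. Qed.
Lemma Cmod_cis a : Cmod (cis a) = 1.
Proof. unfold Cmod, cis. cbn [fst snd]. replace (cos a ^ 2 + sin a ^ 2) with 1. apply sqrt_1. rewrite <- (sin2_cos2 a). unfold Rsqr. ring. Qed.
Lemma cis_0 : cis 0 = RtoC 1.
Proof. unfold cis. rewrite cos_0, sin_0. auto. Qed.
Lemma pow_cis a k : pow_n (cis a) k = cis (INR k * a).
Proof. induction k. simpl. rewrite Rmult_0_l, cis_0. auto.
  simpl pow_n. change mult with Cmult. rewrite IHk, cis_add. f_equal. rewrite S_INR. ring. Qed.
Lemma cis_inv a : Cinv (cis a) = cis (- a).
Proof. assert (cis a <> RtoC 0). intro H. pose proof (Cmod_cis a). rewrite H, Cmod_0 in H0. lra.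
  rewrite <- (Cmult_1_l (Cinv (cis a))). rewrite <- cis_0. replace 0 with (-a + a) by ring.
  rewrite <- cis_add. field. auto. Qed.
Lemma cpowZ_cis a j : cpowZ (cis a) j = cis (IZR j * a).
Proof. unfold cpowZ. destruct (Z.leb_spec 0 j).
  rewrite pow_cis. f_equal. rewrite INR_IZR_INZ. rewrite Z2Nat.id; auto.
  rewrite pow_cis, cis_inv. f_equal. rewrite INR_IZR_INZ. rewrite Z2Nat.id by lia. rewrite opp_IZR. ring. Qed.
Lemma cis_m2PI a : cis (a - 2 * PI) = cis a.
Proof. unfold cis. rewrite cos_minus, sin_minus, cos_2PI, sin_2PI. f_equal; ring. Qed.

Lemma geom_cis x L : Cmult (Cminus (cis x) (RtoC 1)) (sumL 0 L (fun k => cis (IZR k * x))) =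
  Cminus (cis (INR L * x)) (RtoC 1).
Proof. induction L. simpl. rewrite Rmult_0_l, cis_0. apply injective_projections; simpl; ring.
  change (sumL 0 (S L) (fun k => cis (IZR k * x))) with (Cplus (sumL 0 L (fun k => cis (IZR k * x))) (cis (IZR (0 + Z.of_nat L)%Z * x))).
  rewrite Cmult_plus_distr_l, IHL.
  replace (IZR (0 + Z.of_nat L)) with (INR L) by (rewrite INR_IZR_INZ; f_equal; lia).
  rewrite S_INR. replace ((INR L + 1) * x) with (x + INR L * x) by ring. rewrite <- cis_add. ring. Qed.

Lemma cis_2PIj j : cis (IZR j * (2 * PI)) = RtoC 1.
Proof. destruct (Z.leb_spec 0 j).
  unfold cis. replace (IZR j * (2 * PI)) with (0 + 2 * INR (Z.to_nat j) * PI).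
  rewrite cos_period, sin_period, cos_0, sin_0. auto.
  rewrite INR_IZR_INZ, Z2Nat.id by lia. ring.
  unfold cis. replace (IZR j * (2 * PI)) with (- (0 + 2 * INR (Z.to_nat (- j)) * PI)).
  rewrite cos_neg, sin_neg, cos_period, sin_period, cos_0, sin_0. apply injective_projections; simpl; ring.
  rewrite INR_IZR_INZ, Z2Nat.id by lia. rewrite opp_IZR. ring. Qed.

Lemma div_lt_1 a b : 0 < b -> a < b -> a / b < 1.
Proof. intros. apply (Rmult_lt_reg_r b); auto. unfold Rdiv. rewrite Rmult_assoc, Rinv_l; lra. Qed.

Lemma roots_sum (Nn : nat) (j : Z) : (0 < Z.abs j < Z.of_nat Nn)%Z ->
  sumL 0 Nn (fun k => cis (IZR k * (IZR j * (2 * PI) / INR Nn))) = RtoC 0.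
Proof. intros Hj. set (x := IZR j * (2 * PI) / INR Nn).
  assert (HN : 0 < INR Nn). apply lt_0_INR. lia.
  assert (Hw : Cminus (cis x) (RtoC 1) <> RtoC 0).
  { intro H. assert (Hc : cos x = 1). { apply (f_equal fst) in H. simpl in H. unfold cis in H; simpl in H. lra. }
    assert (Hs : sin (x / 2) = 0).
    { replace x with (2 * (x / 2)) in Hc by field. rewrite cos_2a_sin in Hc.
      assert (sin (x/2) * sin (x/2) = 0) by lra. destruct (Rmult_integral _ _ H0); auto. }
    assert (HjN : IZR (Z.abs j) < INR Nn). rewrite INR_IZR_INZ. apply IZR_lt. lia.
    assert (Hj0 : 0 < IZR (Z.abs j)). apply IZR_lt. lia.
    pose proof PI_RGT_0.
    destruct (Z.leb_spec 0 j).
    - rewrite Z.abs_eq in HjN, Hj0 by lia.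
      assert (0 < sin (x/2)). apply sin_gt_0. unfold x. apply Rmult_lt_0_compat; [|lra].
      apply Rdiv_lt_0_compat; nra.
      unfold x. replace (IZR j * (2 * PI) / INR Nn / 2) with (PI * (IZR j / INR Nn)) by (field; lra).
      rewrite <- (Rmult_1_r PI) at 2. apply Rmult_lt_compat_l. lra. apply div_lt_1; lra. lra.
    - rewrite Z.abs_neq in HjN, Hj0 by lia. rewrite opp_IZR in HjN, Hj0.
      assert (Hneg : 0 < sin (- (x/2))). apply sin_gt_0. unfold x.
      replace (- (IZR j * (2 * PI) / INR Nn / 2)) with (PI * (- IZR j / INR Nn)) by (field; lra).
      apply Rmult_lt_0_compat. lra. apply Rdiv_lt_0_compat; lra.
      unfold x. replace (- (IZR j * (2 * PI) / INR Nn / 2)) with (PI * (- IZR j / INR Nn)) by (field; lra).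
      rewrite <- (Rmult_1_r PI) at 2. apply Rmult_lt_compat_l. lra. apply div_lt_1; lra.
      rewrite sin_neg in Hneg. lra. }
  pose proof (geom_cis x Nn) as H.
  replace (INR Nn * x) with (IZR j * (2 * PI)) in H by (unfold x; field; lra).
  rewrite cis_2PIj in H.
  set (S := sumL _ _ _) in *. set (w := Cminus (cis x) (RtoC 1)) in *.
  replace S with (Cmult (Cinv w) (Cmult w S)) by (field; auto). rewrite H. ring. Qed.

Lemma roots_sum0 (Nn : nat) :
  sumL 0 Nn (fun k => cis (IZR k * (0 * (2 * PI) / INR Nn))) = RtoC (INR Nn).
Proof. rewrite (sumL_ext _ _ _ (fun _ => RtoC 1)).
  induction Nn. auto. simpl sumL. rewrite IHNn, S_INR. apply injective_projections; simpl; ring.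
  intros. replace (IZR t * (0 * (2 * PI) / INR Nn)) with 0 by (unfold Rdiv; ring). apply cis_0. Qed.


Definition ztc (p : nat) (u : seqC) (th : R) : C :=
  sumL (- Z.of_nat p) (S (2 * p)) (fun tau => Cmult (u tau) (cis (- IZR tau * th))).

Lemma ztr_cis p u th : ztr p u (cis th) = ztc p u th.
Proof. unfold ztr, ztc. rewrite sumZ_sumL. apply sumL_ext. intros. rewrite cpowZ_cis, opp_IZR. auto. Qed.

Lemma ztc_ext p q u th : finsupp p u -> (p <= q)%nat -> ztc q u th = ztc p u th.
Proof. intros Hu Hpq. unfold ztc. apply sumL_supp; try lia.
  intros t _ Ht. rewrite Hu by lia. apply injective_projections; simpl; ring. Qed.

Lemma sumL_scal_r a L c F : sumL a L (fun t => Cmult (F t) c) = Cmult (sumL a L F) c.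
Proof. rewrite Cmult_comm, <- sumL_scal. apply sumL_ext. intros; apply Cmult_comm. Qed.

Lemma conv_supp p q u v : finsupp p u -> finsupp q v -> finsupp (p + q) (conv p u v).
Proof. intros Hu Hv t Ht. unfold conv. rewrite sumZ_sumL. apply sumL_zero. intros tau Htau.
  rewrite Hv by lia. apply injective_projections; simpl; ring. Qed.

Lemma conv_ztc p q u v th : finsupp p u -> finsupp q v ->
  ztc (p + q) (conv p u v) th = Cmult (ztc p u th) (ztc q v th).
Proof. intros Hu Hv. unfold ztc at 1. unfold conv.
  set (g := fun t => Cmult (v t) (cis (- IZR t * th))).
  set (c := fun tau => Cmult (u tau) (cis (- IZR tau * th))).
  rewrite (sumL_ext _ _ _ (fun t => sumL (- Z.of_nat p) (S (2 * p)) (fun tau => Cmult (c tau) (g (t - tau)%Z)))).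
  2:{ intros t _. rewrite sumZ_sumL, <- sumL_scal_r. apply sumL_ext. intros tau _.
      unfold c, g. rewrite minus_IZR.
      replace (cis (- IZR t * th)) with (Cmult (cis (- IZR tau * th)) (cis (- (IZR t - IZR tau) * th))).
      ring. rewrite cis_add. f_equal. ring. }
  rewrite sumL_swap.
  rewrite (sumL_ext _ _ _ (fun tau => Cmult (c tau) (ztc q v th))).
  apply sumL_scal_r.
  intros tau Htau. rewrite sumL_scal. f_equal. rewrite (sumL_shift _ _ g). unfold ztc. fold g.
  apply sumL_supp; try lia. intros t _ Ht. unfold g. rewrite Hv by lia. apply injective_projections; simpl; ring. Qed.

Lemma ztc_plus p u v th : ztc p (fun t => Cplus (u t) (v t)) th = Cplus (ztc p u th) (ztc p v th).
Proof. unfold ztc. rewrite <- sumL_plus. apply sumL_ext. intros. ring. Qed.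
Lemma ztc_minus p u v th : ztc p (fun t => Cminus (u t) (v t)) th = Cminus (ztc p u th) (ztc p v th).
Proof. unfold ztc. rewrite <- sumL_minus. apply sumL_ext. intros. ring. Qed.


Lemma parseval p Nn u : (2 * p < Nn)%nat ->
  sumR 0 Nn (fun k => Cmod (ztc p u (2 * PI * IZR k / INR Nn)) ^ 2) =
  INR Nn * sumR (- Z.of_nat p) (S (2 * p)) (fun t => Cmod (u t) ^ 2).
Proof. intros Hp.
  set (P := (- Z.of_nat p)%Z). set (Lp := S (2 * p)).
  set (X := fun k tp t => Cmult (Cmult (u t) (Cconj (u tp))) (cis (IZR k * (IZR (tp - t) * (2 * PI) / INR Nn)))).
  assert (Hk : forall k, RtoC (Cmod (ztc p u (2 * PI * IZR k / INR Nn)) ^ 2) =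
     sumL P Lp (fun tp => sumL P Lp (fun t => X k tp t))).
  { intros k. rewrite Cmod2_conj. set (th := 2 * PI * IZR k / INR Nn).
    unfold ztc at 2. rewrite sumL_conj, <- sumL_scal. apply sumL_ext. intros tp _.
    unfold ztc. rewrite <- sumL_scal_r. apply sumL_ext. intros t _. unfold X.
    rewrite Cmult_conj, cis_conj.
    replace (cis (IZR k * (IZR (tp - t) * (2 * PI) / INR Nn))) with (Cmult (cis (- IZR t * th)) (cis (- (- IZR tp * th)))).
    ring. rewrite cis_add. f_equal. unfold th. rewrite minus_IZR. unfold Rdiv. ring. }
  assert (H : RtoC (sumR 0 Nn (fun k => Cmod (ztc p u (2 * PI * IZR k / INR Nn)) ^ 2)) =
              RtoC (INR Nn * sumR P Lp (fun t => Cmod (u t) ^ 2))).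
  { rewrite <- sumL_RtoC. rewrite (sumL_ext _ _ _ _ (fun k _ => Hk k)).
    rewrite sumL_swap.
    rewrite (sumL_ext _ _ _ (fun tp => sumL P Lp (fun t => sumL 0 Nn (fun k => X k tp t)))).
    2:{ intros tp _. apply sumL_swap. }
    rewrite (sumL_ext _ _ _ (fun tp => Cmult (RtoC (INR Nn)) (RtoC (Cmod (u tp) ^ 2)))).
    rewrite sumL_scal, sumL_RtoC. apply injective_projections; simpl; ring.
    intros tp Htp. rewrite (sumL_single _ _ tp); [ | exact Htp | ].
    - unfold X. rewrite sumL_scal. rewrite Z.sub_diag. rewrite roots_sum0. rewrite Cmod2_conj. ring.
    - intros t Ht Hne. unfold X. rewrite sumL_scal. rewrite roots_sum. apply injective_projections; simpl; ring.
      unfold P, Lp in *. lia. }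
  apply (f_equal fst) in H. simpl in H. exact H.
Qed.


Lemma phiX_ztc m phi rho th : finsupp m phi -> finsupp (5 * m) rho ->
  let f := ztc m phi th in
  ztc (9 * m) (phiX m phi rho) th =
  Cplus (Cmult f f) (Cmult (ztc (5 * m) rho th) (Cminus (Cmult f f) (Cmult (Cmult f f) (Cmult f f)))).
Proof. intros Hphi Hrho f. unfold phiX. cbv zeta.
  set (phi2 := conv m phi phi).
  assert (H2 : finsupp (2 * m) phi2). { replace (2 * m)%nat with (m + m)%nat by lia. apply conv_supp; auto. }
  assert (E2 : forall q, (2 * m <= q)%nat -> ztc q phi2 th = Cmult f f).
  { intros q Hq. rewrite (ztc_ext (2 * m)) by auto. replace (2 * m)%nat with (m + m)%nat by lia.
    apply conv_ztc; auto. }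
  set (phi4 := conv (2 * m) phi2 phi2).
  assert (H4 : finsupp (4 * m) phi4). { replace (4 * m)%nat with (2 * m + 2 * m)%nat by lia. apply conv_supp; auto. }
  assert (E4 : ztc (4 * m) phi4 th = Cmult (Cmult f f) (Cmult f f)).
  { replace (4 * m)%nat with (2 * m + 2 * m)%nat by lia. unfold phi4. rewrite conv_ztc by auto. rewrite E2; auto. }
  set (Dd := fun u => Cminus (phi2 u) (phi4 u)).
  assert (HD : finsupp (4 * m) Dd).
  { intros t Ht. unfold Dd. rewrite H4 by lia. rewrite H2 by lia. apply injective_projections; simpl; ring. }
  rewrite ztc_plus. rewrite E2 by lia. f_equal.
  rewrite (ztc_ext (5 * m + 4 * m)). rewrite conv_ztc by auto. f_equal.
  unfold Dd. rewrite ztc_minus, E2, E4 by lia. auto.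
  apply conv_supp; auto. lia. Qed.

Lemma ztc_bound p u th : Cmod (ztc p u th) <= sumR (- Z.of_nat p) (S (2 * p)) (fun t => Cmod (u t)).
Proof. unfold ztc. eapply Rle_trans. apply sumL_Cmod. apply sumR_le. intros. rewrite Cmod_mult, Cmod_cis. lra. Qed.

Lemma supT_ge p u th : Cmod (ztc p u th) <= supT p u.
Proof. unfold supT.
  set (SS := fun r => exists theta : R, r = Cmod (ztr p u (cis theta))).
  destruct (Lub_Rbar_correct SS) as [Hub Hlub].
  set (B := sumR (- Z.of_nat p) (S (2 * p)) (fun t => Cmod (u t))).
  assert (HB : is_ub_Rbar SS B). { intros x [th' ->]. simpl. rewrite ztr_cis. apply ztc_bound. }
  specialize (Hlub B HB). assert (Hx : SS (Cmod (ztc p u th))). { exists th. rewrite ztr_cis. auto. }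
  specialize (Hub _ Hx). destruct (Lub_Rbar SS); simpl in *; tauto. Qed.

Lemma pt_bound f r E : 0 <= E -> Cmod r <= E -> (1 <= Cmod f -> Cmult r (Cmult f f) = RtoC 1) ->
  Cmod (Cplus (Cmult f f) (Cmult r (Cminus (Cmult f f) (Cmult (Cmult f f) (Cmult f f))))) <= Cmod f ^ 2 * (2 + 2 * E) /\
  Cmod (Cplus (Cmult f f) (Cmult r (Cminus (Cmult f f) (Cmult (Cmult f f) (Cmult f f))))) <= 1 + 2 * E.
Proof. intros HE Hr Hf. pose proof (Cmod_ge_0 f) as Hf0. pose proof (Cmod_ge_0 r) as Hr0.
  destruct (Rle_lt_dec 1 (Cmod f)) as [H1|H1].
  - replace (Cplus (Cmult f f) (Cmult r (Cminus (Cmult f f) (Cmult (Cmult f f) (Cmult f f))))) with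
      (Cplus (Cmult f f) (Cmult (Cmult r (Cmult f f)) (Cminus (RtoC 1) (Cmult f f)))) by ring.
    rewrite Hf by auto.
    replace (Cplus (Cmult f f) (Cmult (RtoC 1) (Cminus (RtoC 1) (Cmult f f)))) with (RtoC 1) by ring.
    rewrite Cmod_1. split; nra.
  - assert (Hle : Cmod (Cplus (Cmult f f) (Cmult r (Cminus (Cmult f f) (Cmult (Cmult f f) (Cmult f f))))) <=
       Cmod f ^ 2 + Cmod r * (Cmod f ^ 2 + Cmod f ^ 4)).
    { eapply Rle_trans. apply Cmod_triangle. rewrite !Cmod_mult. apply Rplus_le_compat. right; ring.
      apply Rmult_le_compat_l; auto. unfold Cminus. eapply Rle_trans. apply Cmod_triangle.
      rewrite Cmod_opp, !Cmod_mult. right; ring. }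
    assert (Hx2 : Cmod f ^ 2 <= 1) by (simpl; nra).
    assert (Hx0 : 0 <= Cmod f ^ 2) by (simpl; nra).
    assert (Cmod f ^ 4 <= Cmod f ^ 2). { replace (Cmod f ^ 4) with (Cmod f ^ 2 * Cmod f ^ 2) by ring. nra. }
    assert (Cmod r * (Cmod f ^ 2 + Cmod f ^ 4) <= E * (2 * Cmod f ^ 2)) by nra.
    split; nra. Qed.

Lemma dft_ztc n u k : dft n u k =
  Cmult (RtoC (/ sqrt (INR (2 * n + 1)))) (ztc n u (2 * PI * INR k / INR (2 * n + 1))).
Proof. unfold dft. f_equal. rewrite sumZ_sumL. unfold ztc. apply sumL_ext. intros.
  rewrite Cmult_comm. f_equal. f_equal. unfold Rdiv. ring. Qed.

Lemma Tn_ok n k : (k <= 2 * n)%nat -> exists k' : Z, (- Z.of_nat n <= k' <= Z.of_nat n)%Z /\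
  Tn_pt n k' = cis (2 * PI * INR k / INR (2 * n + 1)).
Proof. intros Hk. destruct (Nat.le_gt_cases k n).
  - exists (Z.of_nat k). split. lia. unfold Tn_pt. rewrite <- INR_IZR_INZ. auto.
  - exists (Z.of_nat k - Z.of_nat (2 * n + 1))%Z. split. lia. unfold Tn_pt.
    rewrite <- (cis_m2PI (2 * PI * INR k / INR (2 * n + 1))). f_equal. rewrite minus_IZR, <- !INR_IZR_INZ. field.
    apply not_0_INR. lia. Qed.

Lemma fold_bound (l : list R) c : 0 <= c -> (forall x, In x l -> x <= c) -> fold_right Rmax 0 l <= c.
Proof. induction l; simpl; intros. auto. apply Rmax_lub; auto. Qed.

Lemma sumR_shift a L F d : sumR a L (fun t => F (t - d)%Z) = sumR (a - d) L F.
Proof. induction L; simpl; auto. rewrite IHL. f_equal. f_equal. lia. Qed.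

Lemma l2sq_sumR m phi : l2sq m phi = sumR (- Z.of_nat m) (S (2 * m)) (fun t => Cmod (phi t) ^ 2).
Proof. unfold l2sq. rewrite sumn_sumR. replace (- Z.of_nat m)%Z with (0 - Z.of_nat m)%Z by lia.
  rewrite <- sumR_shift. apply sumR_ext. intros. rewrite Z2Nat.id by lia. auto. Qed.


Theorem lemma1 (s m n : nat) (ws : list C) (phi rhoX : seqC) (E : R) :
  (s <= m + 1)%nat ->
  n = (9 * m)%nat ->
  length ws = s ->
  finsupp m phi ->
  reproducing m ws phi ->
  l2sq m phi <= 2 * INR s / INR (2 * m + 1) ->
  feasible m n phi rhoX ->
  (forall rho, feasible m n phi rho -> supT (5 * m) rhoX <= supT (5 * m) rho) ->
  E = supT (5 * m) rhoX ->
  Rmax (dft_norm1 n (phiX m phi rhoX)) (18 * INR s * dft_norminf n (phiX m phi rhoX))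
    <= 36 * INR s / sqrt (INR (2 * n + 1)) * (E + 1).
Proof.
  intros Hs Hn Hws Hphi _ Hl2 [Hrho Hfeas] _ HE.
  set (N := INR (2 * n + 1)). assert (HN : 0 < N) by (apply lt_0_INR; lia).
  set (sq := sqrt N). assert (Hsq : 0 < sq) by (apply sqrt_lt_R0; auto).
  assert (HE0 : 0 <= E). { rewrite HE. eapply Rle_trans. apply (Cmod_ge_0 (ztc (5 * m) rhoX 0)). apply supT_ge. }
  assert (Hinv : 0 <= / sq) by (left; apply Rinv_0_lt_compat; auto).
  assert (Hk : forall k, (k <= 2 * n)%nat ->
    Cmod (dft n (phiX m phi rhoX) k) <= / sq * (Cmod (ztc m phi (2 * PI * INR k / N)) ^ 2 * (2 + 2 * E)) /\
    Cmod (dft n (phiX m phi rhoX) k) <= / sq * (1 + 2 * E)).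
  { intros k Hkn. rewrite dft_ztc, Cmod_mult, Cmod_R, Rabs_pos_eq by auto. fold N sq.
    destruct (Tn_ok n k Hkn) as [k' [Hk' HT]]. fold N in HT.
    specialize (Hfeas k' Hk'). rewrite HT, !ztr_cis in Hfeas.
    rewrite Hn. rewrite phiX_ztc by auto.
    destruct (pt_bound (ztc m phi (2 * PI * INR k / N)) (ztc (5 * m) rhoX (2 * PI * INR k / N)) E) as [B1 B2]; auto.
    rewrite HE. apply supT_ge.
    intros H1. rewrite <- (Hfeas H1). f_equal. simpl. change mult with Cmult. change one with (RtoC 1). ring.
    split; apply Rmult_le_compat_l; auto. }
  assert (Hpars := parseval m (2 * n + 1) phi ltac:(lia)). fold N in Hpars. rewrite <- l2sq_sumR in Hpars.
  assert (HsR : 0 <= INR s) by apply pos_INR.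
  assert (Hkey : N * l2sq m phi <= 18 * INR s).
  { assert (N * (2 * INR s / INR (2 * m + 1)) <= 18 * INR s).
    { assert (Hm : 0 < INR (2 * m + 1)) by (apply lt_0_INR; lia).
      unfold N. rewrite Hn. rewrite !plus_INR, !mult_INR in *. simpl (INR 1) in *. simpl (INR 2) in *. simpl (INR 9).
      apply (Rmult_le_reg_r (2 * INR m + 1)). lra. unfold Rdiv. field_simplify; nra. }
    eapply Rle_trans; [|exact H]. apply Rmult_le_compat_l; lra. }
  apply Rmax_lub.
  - unfold dft_norm1. rewrite sumn_sumR.
    eapply Rle_trans. apply sumR_le with (G := fun t => / sq * (2 + 2 * E) * Cmod (ztc m phi (2 * PI * IZR t / N)) ^ 2).
    intros t Ht. destruct (Hk (Z.to_nat t) ltac:(lia)) as [H1 _]. eapply Rle_trans. apply H1.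
    rewrite INR_IZR_INZ, Z2Nat.id by lia. right; ring.
    rewrite sumR_scal. replace (S (2 * n)) with (2 * n + 1)%nat by lia. rewrite Hpars.
    assert (0 <= 2 + 2 * E) by lra.
    apply Rle_trans with (/ sq * (2 + 2 * E) * (18 * INR s)).
    apply Rmult_le_compat_l. apply Rmult_le_pos; auto. auto.
    right. unfold Rdiv. fold N sq. ring.
  - unfold dft_norminf. assert (0 <= 18 * INR s) by lra.
    apply Rle_trans with (18 * INR s * (/ sq * (1 + 2 * E))).
    apply Rmult_le_compat_l; auto. apply fold_bound. apply Rmult_le_pos; auto; lra.
    intros x Hx. apply in_map_iff in Hx. destruct Hx as [k [<- Hk2]]. apply in_seq in Hk2.
    apply (Hk k). lia.
    fold N sq. unfold Rdiv. assert (0 <= INR s * / sq) by (apply Rmult_le_pos; auto). nra.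
Qed.
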